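(* Let $x,y,z$ be fixed roots of unity different from $1$, and let $S\subseteq\mathbb{P}_3$ be the surface defined by $\mathcal{E}^*(a,b,c,d)=0$, where $\mathcal{E}^*$ is obtained from \[\mathcal{E}=B_2^2-A_1B_1B_2+(A_1^2-2A_2)B_2+A_2B_1^2-A_1A_2B_1+A_2^2\] by substituting $A_1=\tfrac{y-x}{y-1}a+\tfrac{xy-1}{y-1}b$, $A_2=xab$, $B_1=\tfrac{z-x}{z-1}c+\tfrac{xz-1}{z-1}d$, $B_2=xcd$. Then $S$ is defined over $\mathbb{Q}$ if and only if either $x^4=y^4=z^4=1$ or $x^6=y^6=z^6=1$.
   Context: $a,b,c,d$ are homogeneous coordinates on $\mathbb{P}_3$; $\mathcal{E}^*$ is homogeneous of degree $4$ with coefficients in $\mathbb{Q}(x,y,z)$. $S$ is defined over $\mathbb{Q}$ if $\mathcal{E}^*$ is a nonzero scalar multiple of a polynomial with rational coefficients. *)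

(* Defs.v *)
From HB Require Import structures.
From mathcomp Require Import all_boot all_order all_algebra all_field.
From mathcomp Require Export mpoly.
Set Implicit Arguments. Unset Strict Implicit. Unset Printing Implicit Defensive.
Import Order.TTheory GRing.Theory Num.Theory.
Local Open Scope ring_scope.

Definition is_root_of_unity (x : algC) : Prop := exists2 n : nat, (0 < n)%N & x ^+ n = 1.

(* Homogeneous coordinates a, b, c, d on P_3 are the variables 'X_0 .. 'X_3. *)
Definition va : {mpoly algC[4]} := 'X_(inord 0).
Definition vb : {mpoly algC[4]} := 'X_(inord 1).
Definition vc : {mpoly algC[4]} := 'X_(inord 2).
Definition vd : {mpoly algC[4]} := 'X_(inord 3).

Definition A1 (x y : algC) : {mpoly algC[4]} :=
  ((y - x) / (y - 1)) *: va + ((x * y - 1) / (y - 1)) *: vb.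
Definition A2 (x : algC) : {mpoly algC[4]} := x *: (va * vb).
Definition B1 (x z : algC) : {mpoly algC[4]} :=
  ((z - x) / (z - 1)) *: vc + ((x * z - 1) / (z - 1)) *: vd.
Definition B2 (x : algC) : {mpoly algC[4]} := x *: (vc * vd).

Definition Epoly (a1 a2 b1 b2 : {mpoly algC[4]}) : {mpoly algC[4]} :=
  b2 ^+ 2 - a1 * b1 * b2 + (a1 ^+ 2 - 2%:R * a2) * b2 + a2 * b1 ^+ 2
  - a1 * a2 * b1 + a2 ^+ 2.

Definition Estar (x y z : algC) : {mpoly algC[4]} :=
  Epoly (A1 x y) (A2 x) (B1 x z) (B2 x).

(* S = {E^* = 0} is defined over Q: E^* is a nonzero scalar multiple of a
   polynomial with rational coefficients. *)
Definition defined_over_Q (P : {mpoly algC[4]}) : Prop :=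
  exists2 lam : algC, lam != 0 &
    exists2 p : {mpoly algC[4]}, p \is a mpolyOver 4 Crat & P = lam *: p.

(* Main.v *)
Set Warnings "-all".
Require Import Defs.
From HB Require Import structures.
From mathcomp Require Import all_boot all_order all_algebra all_field.
From mathcomp Require Import mpoly.
From mathcomp Require Import zify ring lra.
Import Order.TTheory GRing.Theory Num.Theory.
Local Open Scope ring_scope.

Lemma unity_norm (t : algC) : is_root_of_unity t -> `|t| = 1.
Proof.
move=> [n n0 h]; apply/eqP; rewrite -(pexpr_eq1 n0 (normr_ge0 t)) -normrX h normr1 //.
Qed.

Lemma unity_neq0 (t : algC) : is_root_of_unity t -> t != 0.
Proof. by move=> /unity_norm h; apply/eqP => t0; move: h; rewrite t0 normr0 => /eqP; rewrite eq_sym oner_eq0. Qed.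

Lemma tr_int (t : algC) : is_root_of_unity t -> t + t^-1 \in Crat ->
  exists m : int, t + t^-1 = m%:~R /\ (-2 <= m <= 2)%R.
Proof.
move=> ht hQ.
have [n n0 hn] := ht.
have A1 : t \in Aint by apply: (Aint_unity_root n0); apply/unity_rootP.
have A2 : t^-1 \in Aint by apply: (Aint_unity_root n0); apply/unity_rootP; rewrite exprVn hn invr1.
have /intrP [m hm] : t + t^-1 \in Num.int by apply: Cint_rat_Aint => //; apply: rpredD.
exists m; split => //.
have : `|t + t^-1| <= 2.
  apply: (le_trans (ler_normD _ _)); rewrite normfV (unity_norm _ ht) invr1 //.
rewrite hm -intr_norm -[2 : algC]/((2%:Z)%:~R) ler_int ler_norml.
done.
Qed.

Definition kap (t : algC) := (1 + t) ^+ 2 / t.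

Lemma kap_cases (t : algC) : is_root_of_unity t -> t != 1 -> kap t \in Crat ->
  [\/ t = -1 /\ kap t = 0, t ^+ 2 = -1 /\ kap t = 2,
      t ^+ 2 = t - 1 /\ kap t = 3 | t ^+ 2 = - t - 1 /\ kap t = 1].
Proof.
move=> ht t1 hk.
have t0 := unity_neq0 _ ht.
have ktr : kap t = t + t^-1 + 2 by rewrite /kap; field.
have [m [hm hb]] : exists m : int, t + t^-1 = m%:~R /\ (-2 <= m <= 2)%R.
  apply: tr_int => //.
  have -> : t + t^-1 = kap t - 2 by rewrite ktr; ring.
  by rewrite rpredB // rpred_nat.
have eq2 : t ^+ 2 + 1 = m%:~R * t by rewrite -hm; field.
rewrite ktr hm.
have : m = -2 \/ m = -1 \/ m = 0 \/ m = 1 \/ m = 2 by lia.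
move=> hc; move: eq2; case: hc => [->|[->|[->|[->|->]]]] eq2.
- apply: Or41; split; last by rewrite /=; ring.
  have : (t + 1) ^+ 2 = 0 by rewrite -[RHS](subrr (t^+2 + 1)) {2}eq2 /=; ring.
  by move/eqP; rewrite expf_eq0 /= addr_eq0 => /eqP.
- apply: Or44; split; last by rewrite /=; ring.
  by apply/eqP; rewrite -subr_eq0; apply/eqP; rewrite -[RHS](subrr (t^+2 + 1)) {2}eq2 /=; ring.
- apply: Or42; split; last by rewrite /=; ring.
  by apply/eqP; rewrite -subr_eq0; apply/eqP; rewrite -[RHS](subrr (t^+2 + 1)) {2}eq2 /=; ring.
- apply: Or43; split; last by rewrite /=; ring.
  by apply/eqP; rewrite -subr_eq0; apply/eqP; rewrite -[RHS](subrr (t^+2 + 1)) {2}eq2 /=; ring.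
- exfalso; move: t1.
  have : (t - 1) ^+ 2 = 0 by rewrite -[RHS](subrr (t^+2 + 1)) {2}eq2 /=; ring.
  by move/eqP; rewrite expf_eq0 /= subr_eq0 => ->.
Qed.
Lemma no_sqrt3 (q : algC) : q \in Crat -> q ^+ 2 = 3 -> False.
Proof.
move=> qQ hq.
have qA : q \in Aint.
  apply: (@root_monic_Aint ('X^2 - 3%:P)).
  - by rewrite /root !hornerE hq subrr.
  - exact: monicXnsubC.
  - apply/polyOverP=> i; rewrite coefB coefC coefXn.
    by apply: rpredB; [apply: rpred_nat | case: (i == 0)%N; [apply: rpred_nat | apply: rpred0]].
have /intrP [m hm] := Cint_rat_Aint qQ qA.
move: hq; rewrite hm -rmorphXn /= -[3 : algC]/((3%:Z)%:~R) => /intr_inj h.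
move: h; rewrite expr2 => h.
have : (m <= -2 \/ 2 <= m \/ (-1 <= m <= 1))%R by lia.
case=> [hh|[hh|hh]]; nia.
Qed.

Lemma no_sqrt3' (q : algC) : q \in Crat -> q ^+ 2 = 3^-1 -> False.
Proof.
move=> qQ hq; have q0 : q != 0 by apply/eqP => q0; move: hq; rewrite q0 expr0n /= => /esym/eqP; rewrite invr_eq0 pnatr_eq0.
apply: (@no_sqrt3 q^-1); first by rewrite rpredV.
by rewrite exprVn hq invrK.
Qed.
Lemma Epoly_scale (w : algC) a1 a2 b1 b2 :
  Epoly (w *: a1) (w ^+ 2 *: a2) (w *: b1) (w ^+ 2 *: b2) = w ^+ 4 *: Epoly a1 a2 b1 b2.
Proof.
rewrite -!mul_mpolyC /Epoly !rmorphXn /=.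
ring.
Qed.

Lemma Epoly_over (a1 a2 b1 b2 : {mpoly algC[4]}) :
  a1 \is a mpolyOver 4 Crat -> a2 \is a mpolyOver 4 Crat ->
  b1 \is a mpolyOver 4 Crat -> b2 \is a mpolyOver 4 Crat ->
  Epoly a1 a2 b1 b2 \is a mpolyOver 4 Crat.
Proof.
move=> ha1 ha2 hb1 hb2.
by rewrite /Epoly !(rpredD, rpredB, rpredN, rpredM, rpredX, rpred_nat, rpred1).
Qed.

Lemma over_Q_of (x y z w : algC) : y != 1 -> z != 1 -> w != 0 ->
  x / w ^+ 2 \in Crat -> (1 + x) / w \in Crat ->
  (y - x) / (y - 1) / w \in Crat -> (z - x) / (z - 1) / w \in Crat ->
  defined_over_Q (Estar x y z).
Proof.
move=> y1 z1 w0 hr h1 hu hs.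
have y10 : y - 1 != 0 by rewrite subr_eq0.
have z10 : z - 1 != 0 by rewrite subr_eq0.
exists (w ^+ 4); first by rewrite expf_neq0.
pose a1 := ((y - x) / (y - 1) / w) *: va + ((1 + x) / w - (y - x) / (y - 1) / w) *: vb.
pose a2 := (x / w ^+ 2) *: (va * vb).
pose b1 := ((z - x) / (z - 1) / w) *: vc + ((1 + x) / w - (z - x) / (z - 1) / w) *: vd.
pose b2 := (x / w ^+ 2) *: (vc * vd).
have hX : forall i, 'X_i \is a mpolyOver 4 Crat by move=> i; apply: mpolyOverX.
exists (Epoly a1 a2 b1 b2).
  have ha1 : a1 \is a mpolyOver 4 Crat.
    by apply: rpredD; apply: mpolyOverZ => //; rewrite /va /vb /vc /vd ?hX //; rewrite ?hX //; apply: rpredB.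
  have ha2 : a2 \is a mpolyOver 4 Crat.
    by apply: mpolyOverZ => //; rewrite /va /vb /vc /vd ?hX //; apply: rpredM.
  have hb1 : b1 \is a mpolyOver 4 Crat.
    by apply: rpredD; apply: mpolyOverZ => //; rewrite /va /vb /vc /vd ?hX //; apply: rpredB.
  have hb2 : b2 \is a mpolyOver 4 Crat.
    by apply: mpolyOverZ => //; rewrite /va /vb /vc /vd ?hX //; apply: rpredM.
  exact: Epoly_over.

have e1 : A1 x y = w *: a1.
  rewrite /A1 /a1 scalerDr !scalerA; congr (_ *: _ + _ *: _); field; by rewrite ?w0 ?y10 ?z10.
have e2 : A2 x = w ^+ 2 *: a2.
  rewrite /A2 /a2 scalerA; congr (_ *: _); field; done.
have e3 : B1 x z = w *: b1.
  rewrite /B1 /b1 scalerDr !scalerA; congr (_ *: _ + _ *: _); field; by rewrite ?w0 ?y10 ?z10.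
have e4 : B2 x = w ^+ 2 *: b2.
  rewrite /B2 /b2 scalerA; congr (_ *: _); field; done.
have E : Estar x y z = Epoly (w *: a1) (w^+2 *: a2) (w *: b1) (w^+2 *: b2).
  by rewrite /Estar e1 e2 e3 e4.
rewrite E; exact: Epoly_scale.
Qed.
Definition pt (a b c d : algC) : 'I_4 -> algC := fun i => [:: a; b; c; d]`_i.

Definition evE (x y z a b c d : algC) : algC :=
  let u := (y - x) / (y - 1) in let v := (x * y - 1) / (y - 1) in
  let s := (z - x) / (z - 1) in let t := (x * z - 1) / (z - 1) in
  let a1 := u * a + v * b in let a2 := x * (a * b) in
  let b1 := s * c + t * d in let b2 := x * (c * d) in
  b2 ^+ 2 - a1 * b1 * b2 + (a1 ^+ 2 - 2%:R * a2) * b2 + a2 * b1 ^+ 2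
  - a1 * a2 * b1 + a2 ^+ 2.

Lemma ev_formula x y z a b c d : (Estar x y z).@[pt a b c d] = evE x y z a b c d.
Proof.
have h0 : (va).@[pt a b c d] = a by rewrite /va mevalXU /pt inordK.
have h1 : (vb).@[pt a b c d] = b by rewrite /vb mevalXU /pt inordK.
have h2 : (vc).@[pt a b c d] = c by rewrite /vc mevalXU /pt inordK.
have h3 : (vd).@[pt a b c d] = d by rewrite /vd mevalXU /pt inordK.
rewrite /Estar /Epoly /A1 /A2 /B1 /B2 /evE.
by rewrite !(mevalD, mevalB, mevalN, mevalM, mevalZ, rmorphXn, mevalMn, meval1, h0, h1, h2, h3).
Qed.

Lemma ratio_rat x y z a b c d : x != 0 -> defined_over_Q (Estar x y z) ->
  a \in Crat -> b \in Crat -> c \in Crat -> d \in Crat ->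
  evE x y z a b c d / x ^+ 2 \in Crat.
Proof.
move=> x0 [lam lam0 [p pQ hp]] aQ bQ cQ dQ.
have ptQ : forall a b c d, a \in Crat -> b \in Crat -> c \in Crat -> d \in Crat ->
    [forall i, pt a b c d i \in Crat].
  move=> a' b' c' d' ha hb hc hd; apply/forallP => -[[|[|[|[|i]]]] hi] //=.
have e0 : evE x y z 0 0 1 1 = x ^+ 2 by rewrite /evE; ring.
have := ev_formula x y z 0 0 1 1; rewrite e0 hp mevalZ => E0.
have := ev_formula x y z a b c d; rewrite hp mevalZ => E1.
have q0 : p.@[pt 0 0 1 1] \in Crat by apply: rpred_mhorner => //; apply: ptQ; rewrite ?rpred0 ?rpred1.
have q1 : p.@[pt a b c d] \in Crat by apply: rpred_mhorner => //; apply: ptQ.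
have p00 : p.@[pt 0 0 1 1] != 0.
  by apply/eqP => h; move: E0; rewrite h mulr0 => /esym/eqP; rewrite expf_eq0 /= (negbTE x0).
rewrite -E1 -E0.
have -> : lam * p.@[pt a b c d] / (lam * p.@[pt 0 0 1 1]) = p.@[pt a b c d] / p.@[pt 0 0 1 1].
  by field; rewrite p00 lam0.
by rewrite rpred_div.
Qed.

Definition Cf (t : algC) := - ((1 + t) / (1 - t)) ^+ 2.

Lemma Cf_kap t : t != 0 -> t != 1 -> Cf t * (4 - kap t) = kap t.
Proof.
move=> t0 t1; have t10 : 1 - t != 0 by rewrite subr_eq0 eq_sym.
rewrite /Cf /kap; field; by rewrite t0 t10.
Qed.

Lemma kap_Cf t : t != 0 -> t != 1 -> kap t = 4 * Cf t / (1 + Cf t).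
Proof.
move=> t0 t1; have t10 : 1 - t != 0 by rewrite subr_eq0 eq_sym.
have h : kap t * (1 + Cf t) = 4 * Cf t by rewrite /Cf /kap; field; rewrite t0 t10.
have h1 : 1 + Cf t = - 4%:R * t / (1 - t) ^+ 2 by rewrite /Cf; field.
have h2 : 1 + Cf t != 0.
  by rewrite h1 mulf_neq0 ?invr_eq0 ?expf_neq0 // mulf_neq0 // oppr_eq0 pnatr_eq0.
by rewrite -h mulfK.
Qed.

Lemma four_kap x : x != 0 -> x != 1 -> 4 - kap x != 0.
Proof.
move=> x0 x1; have x10 : 1 - x != 0 by rewrite subr_eq0 eq_sym.
have -> : 4 - kap x = - ((1 - x) ^+ 2 / x) by rewrite /kap; field.
by rewrite oppr_eq0 mulf_neq0 ?invr_eq0 ?expf_neq0.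
Qed.

Section Fwd.
Variables x y z : algC.
Hypothesis x0 : x != 0.
Hypothesis y1 : y != 1.
Hypothesis z1 : z != 1.
Hypothesis hQ : defined_over_Q (Estar x y z).

Let y10 : y - 1 != 0. Proof. by rewrite subr_eq0. Qed.
Let z10 : z - 1 != 0. Proof. by rewrite subr_eq0. Qed.
Let R a b c d := evE x y z a b c d / x ^+ 2.
Let RQ a b c d : a \in Crat -> b \in Crat -> c \in Crat -> d \in Crat -> R a b c d \in Crat.
Proof. by move=> *; apply: ratio_rat. Qed.
Let u := (y - x) / (y - 1).
Let s := (z - x) / (z - 1).
Let Q1 : 1 \in Crat. Proof. exact: rpred1. Qed.
Let Q0 : 0 \in Crat. Proof. exact: rpred0. Qed.
Let QN1 : -1 \in Crat. Proof. by rewrite rpredN. Qed.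
Let Q2 : 2 \in Crat. Proof. by rewrite rpred_nat. Qed.

Lemma a1y : u * (1 + x) / x \in Crat.
Proof.
have -> : u * (1 + x) / x = (R (-1) 0 1 1 - R 1 0 1 1) / 2.
  by rewrite /R /evE /u; field; rewrite x0 y10 z10.
by rewrite rpred_div // rpredB // RQ.
Qed.

Lemma a2y : u ^+ 2 / x \in Crat.
Proof.
have -> : u ^+ 2 / x = (R 1 0 1 1 + R (-1) 0 1 1) / 2 - 1.
  by rewrite /R /evE /u; field; rewrite x0 y10 z10.
by rewrite rpredB // rpred_div // rpredD // RQ.
Qed.

Lemma kx : kap x \in Crat.
Proof.
have -> : kap x = u * (1 + x) / x + (R 0 (-1) 1 1 - R 0 1 1 1) / 2.
  by rewrite /R /evE /u /kap; field; rewrite x0 y10 z10.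
by rewrite rpredD ?a1y // rpred_div // rpredB // RQ.
Qed.

Lemma a1z : s * (1 + x) / x \in Crat.
Proof.
have -> : s * (1 + x) / x = (R 1 1 (-1) 0 - R 1 1 1 0) / 2.
  by rewrite /R /evE /s; field; rewrite x0 y10 z10.
by rewrite rpred_div // rpredB // RQ.
Qed.

Lemma a2z : s ^+ 2 / x \in Crat.
Proof.
have -> : s ^+ 2 / x = (R 1 1 1 0 + R 1 1 (-1) 0) / 2 - 1.
  by rewrite /R /evE /s; field; rewrite x0 y10 z10.
by rewrite rpredB // rpred_div // rpredD // RQ.
Qed.

Lemma gam : u * s / x \in Crat.
Proof.
have -> : u * s / x = 2 * (u * (1 + x) / x) - (4 + 2 * (u ^+ 2 / x) - R 1 0 1 2) / 2.
  by rewrite /R /evE /s /u; field; rewrite x0 y10 z10.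
have Q4 : 4 \in Crat by rewrite rpred_nat.
apply: rpredB; first by apply: rpredM => //; exact: a1y.
apply: rpred_div => //; apply: rpredB; last by apply: RQ.
by apply: rpredD => //; apply: rpredM => //; exact: a2y.
Qed.

End Fwd.

Lemma I1 x y : x != 0 -> y != 1 ->
  Cf y * (4 - kap x) = 4 * (((y - x) / (y - 1)) ^+ 2 / x - (y - x) / (y - 1) * (1 + x) / x) + kap x.
Proof.
move=> x0 y1; have y10 : y - 1 != 0 by rewrite subr_eq0.
have y10' : 1 - y != 0 by rewrite subr_eq0 eq_sym.
rewrite /Cf /kap; field; by rewrite x0 y10 y10'.
Qed.

Lemma I2 x y : x != 0 -> y != 1 ->
  (2 * ((y - x) / (y - 1) * (1 + x) / x) - kap x) ^+ 2 = kap x * (4 - kap x) * Cf y.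
Proof.
move=> x0 y1; have y10 : y - 1 != 0 by rewrite subr_eq0.
have y10' : 1 - y != 0 by rewrite subr_eq0 eq_sym.
rewrite /Cf /kap; field; by rewrite x0 y10 y10'.
Qed.

Lemma I3 y z : y != 1 -> z != 1 ->
  ((y - -1) / (y - 1) * ((z - -1) / (z - 1)) / -1) ^+ 2 = Cf y * Cf z.
Proof.
move=> y1 z1; have y10 : y - 1 != 0 by rewrite subr_eq0.
have y10' : 1 - y != 0 by rewrite subr_eq0 eq_sym.
have z10 : z - 1 != 0 by rewrite subr_eq0.
have z10' : 1 - z != 0 by rewrite subr_eq0 eq_sym.
rewrite /Cf; field; by rewrite y10 y10' z10 z10'.
Qed.

Lemma pow_facts (t : algC) :
  (t = -1 -> t ^+ 4 = 1 /\ t ^+ 6 = 1) /\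
  (t ^+ 2 = -1 -> t ^+ 4 = 1) /\
  (t ^+ 2 = t - 1 -> t ^+ 6 = 1) /\
  (t ^+ 2 = - t - 1 -> t ^+ 6 = 1).
Proof.
split; first by move=> ->; split; rewrite -signr_odd.
split.
  move=> h; apply/eqP; rewrite -subr_eq0.
  have -> : t ^+ 4 - 1 = (t ^+ 2 + 1) * (t ^+ 2 - 1) by ring.
  by rewrite h addNr mul0r.
split.
  move=> h; apply/eqP; rewrite -subr_eq0.
  have -> : t ^+ 6 - 1 = (t ^+ 2 - t + 1) * (t + 1) * (t ^+ 3 - 1) by ring.
  have -> : t ^+ 2 - t + 1 = 0 by rewrite h; ring.
  by rewrite !mul0r.
move=> h; apply/eqP; rewrite -subr_eq0.
have -> : t ^+ 6 - 1 = (t ^+ 2 + t + 1) * (t - 1) * (t ^+ 3 + 1) by ring.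
have -> : t ^+ 2 + t + 1 = 0 by rewrite h; ring.
by rewrite !mul0r.
Qed.

Lemma classify t : is_root_of_unity t -> t != 1 -> kap t \in Crat ->
  [\/ t = -1,
      t ^+ 4 = 1 /\ Cf t = 1 /\ kap t = 2 |
      t ^+ 6 = 1 /\ kap t * (4 - kap t) = 3 /\ (Cf t = 3 \/ Cf t = 3^-1)].
Proof.
move=> ht t1 hk.
have t0 := unity_neq0 _ ht.
have hC := Cf_kap t t0 t1.
have [P1 [P2 [P3 P4]]] := pow_facts t.
have E : Cf t = kap t / (4 - kap t) by rewrite -{1}hC mulfK // four_kap.
have n2 : (2 : algC) != 0 by rewrite pnatr_eq0.
have n3 : (3 : algC) != 0 by rewrite pnatr_eq0.
case: (kap_cases t ht t1 hk) => [[h k]|[h k]|[h k]|[h k]].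
- exact: Or31.
- apply: Or32; split; first exact: P2.
  by rewrite E k; split=> //; field.
- apply: Or33; split; first exact: P3.
  rewrite E k; split; first ring.
  by left; field.
- apply: Or33; split; first exact: P4.
  rewrite E k; split; first ring.
  by right; field.
Qed.

Lemma bad (q : algC) : q \in Crat -> q ^+ 2 = 3 \/ q ^+ 2 = 3^-1 -> False.
Proof. by move=> qQ [h|h]; [apply: (no_sqrt3 q) | apply: (no_sqrt3' q)]. Qed.

Lemma exclF (D kx Cy : algC) : D \in Crat -> D ^+ 2 = kx * (4 - kx) * Cy ->
  kx = 2 -> Cy = 3 \/ Cy = 3^-1 -> False.
Proof.
move=> DQ hD k hC; apply: (bad (D / 2)); first by rewrite rpred_div ?rpred_nat.
have -> : (D / 2) ^+ 2 = Cy by rewrite expr_div_n hD k; field.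
exact: hC.
Qed.

Lemma exclS (D kx Cy : algC) : D \in Crat -> D ^+ 2 = kx * (4 - kx) * Cy ->
  kx * (4 - kx) = 3 -> Cy = 1 -> False.
Proof.
move=> DQ hD k hC; apply: (bad D) => //; left; by rewrite hD k hC mulr1.
Qed.

Lemma exclN (g Cy Cz : algC) : g \in Crat -> g ^+ 2 = Cy * Cz ->
  Cy = 1 -> Cz = 3 \/ Cz = 3^-1 -> False.
Proof.
move=> gQ hg h1 h2; apply: (bad g) => //; by rewrite hg h1 mul1r.
Qed.

Lemma final_comb (x y z kx Cy Cz D1 D2 g : algC) (Px Py Pz Qx Qy Qz : Prop) :
  [\/ x = -1, x ^+ 4 = 1 /\ Px /\ kx = 2 | x ^+ 6 = 1 /\ kx * (4 - kx) = 3 /\ Qx] ->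
  [\/ y = -1, y ^+ 4 = 1 /\ Cy = 1 /\ Py | y ^+ 6 = 1 /\ Qy /\ (Cy = 3 \/ Cy = 3^-1)] ->
  [\/ z = -1, z ^+ 4 = 1 /\ Cz = 1 /\ Pz | z ^+ 6 = 1 /\ Qz /\ (Cz = 3 \/ Cz = 3^-1)] ->
  D1 \in Crat -> D1 ^+ 2 = kx * (4 - kx) * Cy ->
  D2 \in Crat -> D2 ^+ 2 = kx * (4 - kx) * Cz ->
  g \in Crat -> (x = -1 -> g ^+ 2 = Cy * Cz) ->
  ((x ^+ 4 = 1 /\ y ^+ 4 = 1 /\ z ^+ 4 = 1) \/
   (x ^+ 6 = 1 /\ y ^+ 6 = 1 /\ z ^+ 6 = 1)).
Proof.
have [P1 _] := pow_facts (-1).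
have [n4 n6] := P1 erefl.
move=> cx cy cz D1Q hD1 D2Q hD2 gQ hg.
case: cx => [ex|[x4 [_ kx2]]|[x6 [kx3 _]]].
- have hg' := hg ex.
  case: cy => [ey|[y4 [cy1 _]]|[y6 [_ cy3]]].
  + case: cz => [ez|[z4 _]|[z6 _]].
    * by left; rewrite ex ey ez.
    * by left; rewrite ex ey.
    * by right; rewrite ex ey.
  + case: cz => [ez|[z4 _]|[z6 [_ cz3]]].
    * by left; rewrite ex ez.
    * by left; rewrite ex.
    * by exfalso; apply: (exclN _ _ _ gQ hg' cy1 cz3).
  + case: cz => [ez|[z4 [cz1 _]]|[z6 _]].
    * by right; rewrite ex ez.
    * by exfalso; apply: (exclN _ _ _ gQ _ cz1 cy3); rewrite mulrC.
    * by right; rewrite ex.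
- case: cy => [ey|[y4 _]|[y6 [_ cy3]]]; last by exfalso; apply: (exclF _ _ _ D1Q hD1 kx2 cy3).
  + case: cz => [ez|[z4 _]|[z6 [_ cz3]]]; last by exfalso; apply: (exclF _ _ _ D2Q hD2 kx2 cz3).
    * by left; rewrite ey ez.
    * by left; rewrite ey.
  + case: cz => [ez|[z4 _]|[z6 [_ cz3]]]; last by exfalso; apply: (exclF _ _ _ D2Q hD2 kx2 cz3).
    * by left; rewrite ez.
    * by left.
- case: cy => [ey|[y4 [cy1 _]]|[y6 _]]; first 2 last.
  + case: cz => [ez|[z4 [cz1 _]]|[z6 _]].
    * by right; rewrite ez.
    * by exfalso; apply: (exclS _ _ _ D2Q hD2 kx3 cz1).
    * by right.
  + case: cz => [ez|[z4 [cz1 _]]|[z6 _]].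
    * by right; rewrite ey ez.
    * by exfalso; apply: (exclS _ _ _ D2Q hD2 kx3 cz1).
    * by right; rewrite ey.
  + by exfalso; apply: (exclS _ _ _ D1Q hD1 kx3 cy1).
Qed.

Lemma CQ_kQ t : is_root_of_unity t -> t != 1 -> Cf t \in Crat -> kap t \in Crat.
Proof.
move=> ht t1 hC; have t0 := unity_neq0 _ ht.
by rewrite kap_Cf // rpred_div // ?rpredM ?rpredD ?rpred_nat ?rpred1.
Qed.

Lemma forward (x y z : algC) :
  is_root_of_unity x -> is_root_of_unity y -> is_root_of_unity z ->
  x != 1 -> y != 1 -> z != 1 -> defined_over_Q (Estar x y z) ->
  ((x ^+ 4 = 1 /\ y ^+ 4 = 1 /\ z ^+ 4 = 1) \/
   (x ^+ 6 = 1 /\ y ^+ 6 = 1 /\ z ^+ 6 = 1)).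
Proof.
move=> hx hy hz x1 y1 z1 hQ.
have x0 := unity_neq0 _ hx.
have kxQ := kx x y z x0 y1 z1 hQ.
have k4 := four_kap x x0 x1.
have Q4 : 4 \in Crat by rewrite rpred_nat.
have CyQ : Cf y \in Crat.
  have -> : Cf y = (4 * (((y - x) / (y - 1)) ^+ 2 / x - (y - x) / (y - 1) * (1 + x) / x) + kap x) / (4 - kap x).
    by rewrite -I1 ?mulfK.
  have h1 := a2y x y z x0 y1 z1 hQ; have h2 := a1y x y z x0 y1 z1 hQ.
  apply: rpred_div; last by apply: rpredB.
  by apply: rpredD => //; apply: rpredM => //; apply: rpredB.
have CzQ : Cf z \in Crat.
  have -> : Cf z = (4 * (((z - x) / (z - 1)) ^+ 2 / x - (z - x) / (z - 1) * (1 + x) / x) + kap x) / (4 - kap x).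
    by rewrite -I1 ?mulfK.
  have h1 := a2z x y z x0 y1 z1 hQ; have h2 := a1z x y z x0 y1 z1 hQ.
  apply: rpred_div; last by apply: rpredB.
  by apply: rpredD => //; apply: rpredM => //; apply: rpredB.
apply: (@final_comb x y z (kap x) (Cf y) (Cf z)
   (2 * ((y - x) / (y - 1) * (1 + x) / x) - kap x)
   (2 * ((z - x) / (z - 1) * (1 + x) / x) - kap x)
   ((y - x) / (y - 1) * ((z - x) / (z - 1)) / x)).
- exact: classify.
- by apply: classify => //; apply: CQ_kQ.
- by apply: classify => //; apply: CQ_kQ.
- apply: rpredB => //; apply: rpredM; first by rewrite rpred_nat.
  exact: (a1y x y z x0 y1 z1 hQ).
- by rewrite I2.
- apply: rpredB => //; apply: rpredM; first by rewrite rpred_nat.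
  exact: (a1z x y z x0 y1 z1 hQ).
- by rewrite I2.
- exact: (gam x y z x0 y1 z1 hQ).
- move=> ex; move: (I3 y z y1 z1); by rewrite ex.
Qed.

Lemma vals_of (t : algC) (a b : algC) : t != 0 -> t != 1 -> t ^+ 2 = a * t + b ->
  kap t = 2 + a + (1 + b) / t.
Proof.
move=> t0 t1 h.
have -> : kap t = (1 + 2 * t + t ^+ 2) / t by rewrite /kap; field.
by rewrite h; field.
Qed.

Lemma Cf_of (t : algC) : t != 0 -> t != 1 -> Cf t = kap t / (4 - kap t).
Proof.
move=> t0 t1; have hC := Cf_kap t t0 t1.
by rewrite -{1}hC mulfK // four_kap.
Qed.

Lemma vals4 (t : algC) : t ^+ 4 = 1 -> t != 1 ->
  (t = -1 /\ Cf t = 0 /\ kap t = 0) \/ (t ^+ 2 = -1 /\ Cf t = 1 /\ kap t = 2).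
Proof.
move=> h t1.
have : (t - 1) * ((t + 1) * (t ^+ 2 + 1)) == 0.
  apply/eqP; have -> : (t - 1) * ((t + 1) * (t ^+ 2 + 1)) = t ^+ 4 - 1 by ring.
  by rewrite h subrr.
rewrite !mulf_eq0 subr_eq0 (negbTE t1) /= => /orP [|] /eqP e.
  have -> : t = -1 by apply/eqP; rewrite -subr_eq0 opprK; apply/eqP.
  by left; split=> //; rewrite /Cf /kap; split; rewrite addrN ?mul0r ?expr0n /= ?oppr0 ?mul0r.
have t2 : t ^+ 2 = -1 by apply/eqP; rewrite -subr_eq0 opprK; apply/eqP.
have t0 : t != 0 by apply/eqP => t0; move: t2; rewrite t0 expr0n /= => /eqP; rewrite eq_sym oppr_eq0 oner_eq0.
have hk : kap t = 2.
  by rewrite (@vals_of t 0 (-1)) // ?t2 ?mul0r ?add0r //; field.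
right; split=> //; split=> //.
by rewrite Cf_of // hk; field.
Qed.

Lemma vals6 (t : algC) : t ^+ 6 = 1 -> t != 1 ->
  [\/ t = -1 /\ Cf t = 0 /\ kap t = 0, Cf t = 3 /\ kap t = 3 | Cf t = 3^-1 /\ kap t = 1].
Proof.
move=> h t1.
have t0 : t != 0 by apply/eqP => t0; move: h; rewrite t0 expr0n /= => /eqP; rewrite eq_sym oner_eq0.
have : (t - 1) * ((t + 1) * ((t ^+ 2 - t + 1) * (t ^+ 2 + t + 1))) == 0.
  apply/eqP; have -> : (t - 1) * ((t + 1) * ((t ^+ 2 - t + 1) * (t ^+ 2 + t + 1))) = t ^+ 6 - 1 by ring.
  by rewrite h subrr.
rewrite !mulf_eq0 subr_eq0 (negbTE t1) /= => /orP [/eqP e|/orP [/eqP e|/eqP e]].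
- have -> : t = -1 by apply/eqP; rewrite -subr_eq0 opprK; apply/eqP.
  by apply: Or31; split=> //; rewrite /Cf /kap; split; rewrite addrN ?mul0r ?expr0n /= ?oppr0 ?mul0r.
- have t2 : t ^+ 2 = 1 * t + (-1) by rewrite mul1r; apply/eqP; rewrite -subr_eq0; apply/eqP; rewrite -e; ring.
  have hk : kap t = 3 by rewrite (vals_of _ _ _ t0 t1 t2); field.
  by apply: Or32; split=> //; rewrite Cf_of // hk; field.
- have t2 : t ^+ 2 = (-1) * t + (-1) by apply/eqP; rewrite -subr_eq0; apply/eqP; rewrite -e; ring.
  have hk : kap t = 1 by rewrite (vals_of _ _ _ t0 t1 t2); field.
  by apply: Or33; split=> //; rewrite Cf_of // hk; field.
Qed.

Lemma sqrat (t q : algC) : q \in Crat -> t ^+ 2 = q ^+ 2 -> t \in Crat.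
Proof.
move=> qQ h.
have : (t - q) * (t + q) == 0.
  apply/eqP; have -> : (t - q) * (t + q) = t ^+ 2 - q ^+ 2 by ring.
  by rewrite h subrr.
rewrite mulf_eq0 => /orP [|] /eqP e.
  by have -> : t = q by apply/eqP; rewrite -subr_eq0; apply/eqP.
have -> : t = - q by apply/eqP; rewrite -subr_eq0 opprK; apply/eqP.
by rewrite rpredN.
Qed.

Lemma uw_xm1 (t w m q : algC) : t != 1 -> w ^+ 2 = - m -> m != 0 -> q \in Crat ->
  Cf t / m = q ^+ 2 -> (t - -1) / (t - 1) / w \in Crat.
Proof.
move=> t1 hw m0 qQ hq; apply: (sqrat _ _ qQ); rewrite -hq.
have t10 : t - 1 != 0 by rewrite subr_eq0.
have t10' : 1 - t != 0 by rewrite subr_eq0 eq_sym.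
rewrite expr_div_n hw /Cf; field; by rewrite m0 t10 t10'.
Qed.

Lemma uw_x (x t q : algC) : x != 0 -> t != 1 -> 1 + x != 0 ->
  kap x \in Crat -> q \in Crat -> kap x * (4 - kap x) * Cf t = q ^+ 2 ->
  (t - x) / (t - 1) / (1 + x) \in Crat.
Proof.
move=> x0 t1 x1 kQ qQ hq.
have t10 : t - 1 != 0 by rewrite subr_eq0.
have DQ : 2 * ((t - x) / (t - 1) * (1 + x) / x) - kap x \in Crat.
  by apply: (sqrat _ _ qQ); rewrite I2.
have aQ : (t - x) / (t - 1) * (1 + x) / x \in Crat.
  have -> : (t - x) / (t - 1) * (1 + x) / x = ((2 * ((t - x) / (t - 1) * (1 + x) / x) - kap x) + kap x) / 2.
    by field; rewrite x0 t10.
  by apply: rpred_div; [apply: rpredD | rewrite rpred_nat].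
have -> : (t - x) / (t - 1) / (1 + x) = ((t - x) / (t - 1) * (1 + x) / x) / kap x.
  by rewrite /kap; field; rewrite x0 t10 x1.
by rewrite rpred_div.
Qed.

Lemma back_m1 (y z w m qy qz : algC) : y != 1 -> z != 1 -> w ^+ 2 = - m -> m \in Crat -> m != 0 ->
  qy \in Crat -> Cf y / m = qy ^+ 2 -> qz \in Crat -> Cf z / m = qz ^+ 2 ->
  defined_over_Q (Estar (-1) y z).
Proof.
move=> y1 z1 hw mQ m0 qyQ hy qzQ hz.
have w0 : w != 0 by apply/eqP => w0; move: hw; rewrite w0 expr0n /= => /eqP; rewrite eq_sym oppr_eq0 (negbTE m0).
apply: (over_Q_of _ _ _ w) => //.
- rewrite hw; have -> : -1 / - m = m^-1 by field.
  by rewrite rpredV.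
- by rewrite addrN mul0r rpred0.
- exact: (uw_xm1 _ _ _ _ y1 hw m0 qyQ hy).
- exact: (uw_xm1 _ _ _ _ z1 hw m0 qzQ hz).
Qed.

Lemma back_x (x y z qy qz : algC) : x != 0 -> y != 1 -> z != 1 -> 1 + x != 0 ->
  kap x \in Crat -> qy \in Crat -> kap x * (4 - kap x) * Cf y = qy ^+ 2 ->
  qz \in Crat -> kap x * (4 - kap x) * Cf z = qz ^+ 2 ->
  defined_over_Q (Estar x y z).
Proof.
move=> x0 y1 z1 x1 kQ qyQ hy qzQ hz.
apply: (over_Q_of _ _ _ (1 + x)) => //.
- have -> : x / (1 + x) ^+ 2 = (kap x)^-1 by rewrite /kap; field; rewrite x0 x1.
  by rewrite rpredV.
- by rewrite divff // rpred1.
- exact: (uw_x _ _ _ x0 y1 x1 kQ qyQ hy).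
- exact: (uw_x _ _ _ x0 z1 x1 kQ qzQ hz).
Qed.

Lemma sq41 (c : algC) : c = 0 \/ c = 1 -> exists2 q : algC, q \in Crat & c / 1 = q ^+ 2.
Proof.
case=> ->; [exists 0; [exact: rpred0 | by field] | exists 1; [exact: rpred1 | by field]].
Qed.

Lemma sq4x (c : algC) : c = 0 \/ c = 1 -> exists2 q : algC, q \in Crat & 2 * (4 - 2) * c = q ^+ 2.
Proof.
case=> ->; [exists 0; [exact: rpred0 | ring] | exists 2; [exact: rpred_nat | ring]].
Qed.

Lemma sq61 (c : algC) : [\/ c = 0, c = 3 | c = 3^-1] -> exists2 q : algC, q \in Crat & c / 3 = q ^+ 2.
Proof.
have n3 : (3 : algC) != 0 by rewrite pnatr_eq0.
case=> ->; [exists 0; [exact: rpred0 | by field] | exists 1; [exact: rpred1 | by field]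
  | exists 3^-1; [by rewrite rpredV rpred_nat | by field]].
Qed.

Lemma sq6x (k c : algC) : k * (4 - k) = 3 -> [\/ c = 0, c = 3 | c = 3^-1] ->
  exists2 q : algC, q \in Crat & k * (4 - k) * c = q ^+ 2.
Proof.
have n3 : (3 : algC) != 0 by rewrite pnatr_eq0.
move=> ->; case=> ->; [exists 0; [exact: rpred0 | ring] | exists 3; [exact: rpred_nat | ring]
  | exists 1; [exact: rpred1 | by field]].
Qed.

Lemma c4 (t : algC) : t ^+ 4 = 1 -> t != 1 -> Cf t = 0 \/ Cf t = 1.
Proof. by move=> h t1; case: (vals4 t h t1) => [[_ [-> _]]|[_ [-> _]]]; [left|right]. Qed.

Lemma c6 (t : algC) : t ^+ 6 = 1 -> t != 1 -> [\/ Cf t = 0, Cf t = 3 | Cf t = 3^-1].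
Proof.
by move=> h t1; case: (vals6 t h t1) => [[_ [-> _]]|[-> _]|[-> _]]; [apply: Or31|apply: Or32|apply: Or33].
Qed.

Lemma backward (x y z : algC) : x != 1 -> y != 1 -> z != 1 ->
  ((x ^+ 4 = 1 /\ y ^+ 4 = 1 /\ z ^+ 4 = 1) \/
   (x ^+ 6 = 1 /\ y ^+ 6 = 1 /\ z ^+ 6 = 1)) -> defined_over_Q (Estar x y z).
Proof.
move=> x1 y1 z1 [[x4 [y4 z4]]|[x6 [y6 z6]]].
- have [qy qyQ hy] := sq41 _ (c4 y y4 y1).
  have [qz qzQ hz] := sq41 _ (c4 z z4 z1).
  have [qy' qyQ' hy'] := sq4x _ (c4 y y4 y1).
  have [qz' qzQ' hz'] := sq4x _ (c4 z z4 z1).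
  case: (vals4 x x4 x1) => [[-> _]|[x2 [_ kx]]].
    by apply: (back_m1 y z 'i 1 qy qz) => //; rewrite ?sqrCi ?rpred1 ?oner_eq0.
  have x0 : x != 0 by apply/eqP => x0; move: x2; rewrite x0 expr0n /= => /eqP; rewrite eq_sym oppr_eq0 oner_eq0.
  have xm1 : 1 + x != 0.
    apply/eqP => e; have ex : x = -1 by apply/eqP; rewrite -subr_eq0 opprK addrC; apply/eqP.
    by move: x2; rewrite ex sqrrN expr1n => /eqP; rewrite -subr_eq0 opprK (_ : (1 + 1 : algC) = 2%:R) // pnatr_eq0.
  by apply: (back_x x y z qy' qz') => //; rewrite kx // rpred_nat.
- have [qy qyQ hy] := sq61 _ (c6 y y6 y1).
  have [qz qzQ hz] := sq61 _ (c6 z z6 z1).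
  have x0 : x != 0 by apply/eqP => x0; move: x6; rewrite x0 expr0n /= => /eqP; rewrite eq_sym oner_eq0.
  have km1 : kap (-1) = 0 by rewrite /kap addrN expr0n mul0r.
  have gen : forall k : algC, kap x = k -> k * (4 - k) = 3 -> k != 0 -> k \in Crat -> defined_over_Q (Estar x y z).
    move=> k hk h3 k0 kQ.
    have xm1 : 1 + x != 0.
      apply/eqP => e; have ex : x = -1 by apply/eqP; rewrite -subr_eq0 opprK addrC; apply/eqP.
      by move: hk; rewrite ex km1 => ek; move: k0; rewrite -ek eqxx.
    have [qy' qyQ' hy'] := sq6x _ _ h3 (c6 y y6 y1).
    have [qz' qzQ' hz'] := sq6x _ _ h3 (c6 z z6 z1).
    by apply: (back_x x y z qy' qz') => //; rewrite hk.
  case: (vals6 x x6 x1) => [[-> _]|[_ kx]|[_ kx]].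
  + apply: (back_m1 y z (sqrtC (-3)) 3 qy qz) => //; rewrite ?sqrtCK ?rpred_nat ?pnatr_eq0 //.
  + by apply: (gen 3) => //; rewrite ?rpred_nat ?pnatr_eq0 //; ring.
  + by apply: (gen 1) => //; rewrite ?rpred1 ?oner_eq0 //; ring.
Qed.

Theorem propositionA3 (x y z : algC) :
  is_root_of_unity x -> is_root_of_unity y -> is_root_of_unity z ->
  x != 1 -> y != 1 -> z != 1 ->
  (defined_over_Q (Estar x y z) <->
   ((x ^+ 4 = 1 /\ y ^+ 4 = 1 /\ z ^+ 4 = 1) \/
    (x ^+ 6 = 1 /\ y ^+ 6 = 1 /\ z ^+ 6 = 1))).
Proof.
move=> hx hy hz x1 y1 z1; split.
  exact: (forward x y z hx hy hz x1 y1 z1).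
exact: (backward x y z x1 y1 z1).
Qed.
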